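(* Let $n\geq 5$. For a primitive root of unity $q$ of order $k$, let $\beta_{-q}$ be the reduced Burau representation of $B_n$ evaluated at $-q$, and let $B_n[k]$ be the normal subgroup of $B_n$ generated by $g_1^k,\ldots,g_{n-1}^k$. Then the equality $\ker\beta_{-q}=B_n[k]$ fails for all but finitely many primitive roots of unity $q$ of even order $k$.
   Context: $B_n$ is the braid group with standard generators $g_1,\ldots,g_{n-1}$. The reduced Burau representation $\beta_t:B_n\to GL(n-1,\mathbb{Z}[t,t^{-1}])$ is the standard one: $\beta_t(g_1)=\begin{pmatrix}-t&1\\0&1\end{pmatrix}\oplus \mathbf{1}_{n-3}$, $\beta_t(g_j)=\mathbf{1}_{j-2}\oplus\begin{pmatrix}1&0&0\\ t&-t&1\\0&0&1\end{pmatrix}\oplus\mathbf{1}_{n-j-2}$ for $2\leq j\leq n-2$, and $\beta_t(g_{n-1})=\mathbf{1}_{n-3}\oplus\begin{pmatrix}1&0\\ t&-t\end{pmatrix}$; $\beta_{-q}$ means specializing $t=-q$. *)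

(* Defs.v *)
From Stdlib Require Import Relation_Operators.
From mathcomp Require Import all_boot all_order all_algebra all_field.
Unset Implicit Arguments. Unset Printing Implicit Defensive.
Import GRing.Theory Num.Theory.
Local Open Scope ring_scope.

(* Braid words on B_n: a letter (i, true) is the generator g_{i+1},
   (i, false) its inverse g_{i+1}^{-1}; i : 'I_(n.-1). *)
Definition letter (n : nat) := ('I_n.-1 * bool)%type.
Definition word (n : nat) := seq (letter n).

Definition winv n (w : word n) : word n := [seq (x.1, ~~ x.2) | x <- rev w].

Inductive braid_step (n : nat) : word n -> word n -> Prop :=
| bs_free (x y : word n) (a : 'I_n.-1) (b : bool) :
    braid_step n (x ++ [:: (a, b); (a, ~~ b)] ++ y) (x ++ y)
| bs_comm (x y : word n) (i j : 'I_n.-1) :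
    ((i.+1 < j)%N || (j.+1 < i)%N) ->
    braid_step n (x ++ [:: (i, true); (j, true)] ++ y)
               (x ++ [:: (j, true); (i, true)] ++ y)
| bs_braid (x y : word n) (i j : 'I_n.-1) :
    nat_of_ord j = (nat_of_ord i).+1 ->
    braid_step n (x ++ [:: (i, true); (j, true); (i, true)] ++ y)
               (x ++ [:: (j, true); (i, true); (j, true)] ++ y).

Definition braid_eq (n : nat) : word n -> word n -> Prop :=
  clos_refl_sym_trans (word n) (braid_step n).

Definition conj_pow n (k : nat) (r : word n * letter n) : word n :=
  r.1 ++ nseq k r.2 ++ winv n r.1.

Definition in_Bnk n (k : nat) (w : word n) : Prop :=
  exists rs : seq (word n * letter n),
    braid_eq n w (flatten [seq conj_pow n k r | r <- rs]).

Definition burau_gen n (t : algC) (i : 'I_n.-1) : 'M[algC]_(n.-1) :=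
  \matrix_(r < n.-1, c < n.-1)
    if r != i then (r == c)%:R
    else if (c.+1 == i)%N then t
    else if c == i then - t
    else if (nat_of_ord c == i.+1)%N then 1 else 0.

Definition burau_letter n (t : algC) (x : letter n) : 'M[algC]_(n.-1) :=
  if x.2 then burau_gen n t x.1 else invmx (burau_gen n t x.1).

Definition burau_eval n (t : algC) (w : word n) : 'M[algC]_(n.-1) :=
  foldr (fun x M => burau_letter n t x *m M) 1%:M w.

(* Main.v *)
Require Import Defs.
From mathcomp Require Import all_boot all_order all_algebra all_field.
From Stdlib Require Import ZArith FunctionalExtensionality Lia.
From mathcomp Require Import zify ring.
Set Warnings "-notation-overridden -ambiguous-paths".
Import GRing.Theory Num.Theory.
Local Open Scope ring_scope.

Definition zR (z : Z) : algC := (Z.to_nat z)%:R - (Z.to_nat (- z))%:R.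

Lemma zR_add a b : zR (a + b)%Z = zR a + zR b.
Proof.
rewrite /zR.
have H : addn (addn (Z.to_nat (a + b)) (Z.to_nat (- a))) (Z.to_nat (- b)) =
          addn (addn (Z.to_nat a) (Z.to_nat b)) (Z.to_nat (- (a + b))) by lia.
have H' := congr1 (fun n : nat => n%:R : algC) H.
rewrite /= !natrD in H'.
have -> : (Z.to_nat (a + b))%:R = (Z.to_nat a)%:R + (Z.to_nat b)%:R
   + (Z.to_nat (- (a + b)))%:R - (Z.to_nat (- a))%:R - (Z.to_nat (- b))%:R :> algC.
  by rewrite -H'; ring.
ring.
Qed.

Lemma zR_opp a : zR (- a)%Z = - zR a.
Proof. by rewrite /zR Z.opp_involutive opprB. Qed.

Lemma zR0 : zR 0%Z = 0.
Proof. by rewrite /zR /= subrr. Qed.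

Lemma zR1 : zR 1%Z = 1.
Proof. by rewrite /zR /= subr0. Qed.

Fixpoint padd (a b : list Z) : list Z :=
  match a, b with
  | nil, _ => b
  | _, nil => a
  | cons x a', cons y b' => cons (x + y)%Z (padd a' b')
  end.
Definition pneg (a : list Z) : list Z := map Z.opp a.
Definition psh (a : list Z) : list Z := cons 0%Z a.

Fixpoint interp (t : algC) (p : list Z) : algC :=
  match p with nil => 0 | cons c p' => zR c + t * interp t p' end.

Lemma interp_add t a b : interp t (padd a b) = interp t a + interp t b.
Proof.
elim: a b => [|x a IH] [|y b] /=; rewrite ?add0r ?addr0 //.
rewrite IH zR_add; ring.
Qed.

Lemma interp_neg t a : interp t (pneg a) = - interp t a.
Proof. elim: a => [|x a IH] /=; first by rewrite oppr0. rewrite IH zR_opp; ring. Qed.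

Lemma interp_sh t a : interp t (psh a) = t * interp t a.
Proof. by rewrite /= zR0 add0r. Qed.

Definition iszero (p : list Z) : bool := all (fun c => Z.eqb c 0) p.

Lemma interp_zero t p : iszero p -> interp t p = 0.
Proof.
elim: p => [|c p IH] //= /andP [/Z.eqb_spec -> /IH ->].
by rewrite zR0 mulr0 addr0.
Qed.
(* ---------- Hecke tensor representation on functions ---------- *)
Definition sw (i : nat) (x : nat -> bool) : nat -> bool :=
  fun j => if j == i then x i.+1 else if j == i.+1 then x i else x j.
Definition c1 (q : algC) (a b : bool) : algC := if a == b then q else if a then q - 1 else 0.
Definition c2 (q : algC) (a b : bool) : algC := if a == b then 0 else if a then 1 else q.
Definition Top (q : algC) (i : nat) (f : (nat -> bool) -> algC) (x : nat -> bool) : algC :=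
  c1 q (x i) (x i.+1) * f x + c2 q (x i) (x i.+1) * f (sw i x).
Definition Tinv (q : algC) i f x : algC := q^-1 * (Top q i f x - (q - 1) * f x).

Lemma sw_i i x : sw i x i = x i.+1.
Proof. by rewrite /sw eqxx. Qed.
Lemma sw_i1 i x : sw i x i.+1 = x i.
Proof. have h : (i.+1 == i) = false by apply/eqP; lia. by rewrite /sw h eqxx. Qed.
Lemma sw_sw i x : sw i (sw i x) = x.
Proof.
apply: functional_extensionality => j; rewrite /sw.
have h : (i.+1 == i) = false by apply/eqP; lia.
rewrite eqxx h eqxx.
by case: (eqVneq j i) => [E|?]; rewrite ?E //; case: (eqVneq j i.+1) => [E|?]; rewrite ?E.
Qed.

Lemma Top_lin q i a b g h :
  Top q i (fun x => a * g x + b * h x) = fun x => a * Top q i g x + b * Top q i h x.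
Proof. apply: functional_extensionality => x; rewrite /Top; ring. Qed.

Lemma Top_quad q i f :
  Top q i (Top q i f) = fun x => (q - 1) * Top q i f x + q * f x.
Proof.
apply: functional_extensionality => x.
rewrite /Top /= sw_i sw_i1 sw_sw.
case: (x i); case: (x i.+1); rewrite /c1 /c2 /=; ring.
Qed.

Lemma Top_Tinv q i f : q != 0 -> Top q i (Tinv q i f) = f.
Proof.
move=> q0.
have -> : Tinv q i f = fun x => q^-1 * Top q i f x + (- (q^-1 * (q - 1))) * f x.
  by apply: functional_extensionality => x; rewrite /Tinv; ring.
rewrite Top_lin Top_quad; apply: functional_extensionality => x; field.
by [].
Qed.

Lemma Tinv_Top q i f : q != 0 -> Tinv q i (Top q i f) = f.
Proof.
move=> q0; apply: functional_extensionality => x.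
rewrite /Tinv Top_quad; field. by [].
Qed.

Definition mk3 (x : nat -> bool) i a b c : nat -> bool :=
  fun j => if j == i then a else if j == i.+1 then b else if j == i.+2 then c else x j.

Lemma neqs i : [/\ (i.+1 == i) = false, (i.+2 == i) = false, (i.+2 == i.+1) = false,
   (i == i.+1) = false & (i == i.+2) = false /\ (i.+1 == i.+2) = false].
Proof. by split; try split; apply/eqP; lia. Qed.

Lemma mk3_id x i : x = mk3 x i (x i) (x i.+1) (x i.+2).
Proof.
apply: functional_extensionality => j; rewrite /mk3.
by case: (eqVneq j i) => [E|?]; rewrite ?E //; case: (eqVneq j i.+1) => [E|?]; rewrite ?E //; case: (eqVneq j i.+2) => [E|?]; rewrite ?E.
Qed.

Lemma mk3_0 x i a b c : mk3 x i a b c i = a.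
Proof. by rewrite /mk3 eqxx. Qed.
Lemma mk3_1 x i a b c : mk3 x i a b c i.+1 = b.
Proof. by case: (neqs i) => h1 h2 h3 h4 [h5 h6]; rewrite /mk3 h1 eqxx. Qed.
Lemma mk3_2 x i a b c : mk3 x i a b c i.+2 = c.
Proof. by case: (neqs i) => h1 h2 h3 h4 [h5 h6]; rewrite /mk3 h2 h3 eqxx. Qed.

Lemma sw_mk3_0 x i a b c : sw i (mk3 x i a b c) = mk3 x i b a c.
Proof.
apply: functional_extensionality => j; rewrite /sw mk3_0 mk3_1 /mk3.
by case: (eqVneq j i) => [E|?]; rewrite ?E //; case: (eqVneq j i.+1) => [E|?]; rewrite ?E.
Qed.
Lemma sw_mk3_1 x i a b c : sw i.+1 (mk3 x i a b c) = mk3 x i a c b.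
Proof.
apply: functional_extensionality => j; rewrite /sw mk3_1 mk3_2 /mk3.
case: (eqVneq j i) => [E|?]; rewrite ?E.
  by case: (neqs i) => h1 h2 h3 h4 [h5 h6]; rewrite h4 h5.
by case: (eqVneq j i.+1) => [E|?]; rewrite ?E //; case: (eqVneq j i.+2) => [E|?]; rewrite ?E.
Qed.

Lemma Top_braid q i f :
  Top q i (Top q i.+1 (Top q i f)) = Top q i.+1 (Top q i (Top q i.+1 f)).
Proof.
apply: functional_extensionality => x.
rewrite (mk3_id x i); move: (x i) (x i.+1) (x i.+2) => a b c.
rewrite /Top !(sw_mk3_0, sw_mk3_1, mk3_0, mk3_1, mk3_2).
case: a; case: b; case: c; rewrite /c1 /c2 /=; ring.
Qed.

Definition mk2 (x : nat -> bool) i a b : nat -> bool :=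
  fun j => if j == i then a else if j == i.+1 then b else x j.

Lemma mk2_id x i : x = mk2 x i (x i) (x i.+1).
Proof.
apply: functional_extensionality => j; rewrite /mk2.
by case: (eqVneq j i) => [E|?]; rewrite ?E //; case: (eqVneq j i.+1) => [E|?]; rewrite ?E.
Qed.
Lemma mk2_0 x i a b : mk2 x i a b i = a.
Proof. by rewrite /mk2 eqxx. Qed.
Lemma mk2_1 x i a b : mk2 x i a b i.+1 = b.
Proof. by case: (neqs i) => h1 h2 h3 h4 [h5 h6]; rewrite /mk2 h1 eqxx. Qed.
Lemma sw_mk2 x i a b : sw i (mk2 x i a b) = mk2 x i b a.
Proof.
apply: functional_extensionality => j; rewrite /sw mk2_0 mk2_1 /mk2.
by case: (eqVneq j i) => [E|?]; rewrite ?E //; case: (eqVneq j i.+1) => [E|?]; rewrite ?E.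
Qed.
Lemma mk2_far x i j a b : (i.+1 < j)%nat || (j.+1 < i)%nat ->
  mk2 x i a b j = x j /\ mk2 x i a b j.+1 = x j.+1.
Proof.
move=> h; rewrite /mk2.
have e1 : (j == i) = false by apply/eqP; lia.
have e2 : (j == i.+1) = false by apply/eqP; lia.
have e3 : (j.+1 == i) = false by apply/eqP; lia.
have e4 : (j.+1 == i.+1) = false by apply/eqP; lia.
by rewrite e1 e2 e3 e4.
Qed.
Lemma sw_mk2_far x i j a b : (i.+1 < j)%nat || (j.+1 < i)%nat ->
  sw j (mk2 x i a b) = mk2 (sw j x) i a b.
Proof.
move=> h; apply: functional_extensionality => k.
case: (mk2_far x i j a b h) => e1' e2'.
rewrite /sw e1' e2' /mk2.
case: (eqVneq k j) => [E|?]; rewrite ?E.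
  have e1 : (j == i) = false by apply/eqP; lia.
  have e2 : (j == i.+1) = false by apply/eqP; lia.
  by rewrite e1 e2 ?eqxx.
case: (eqVneq k j.+1) => [E|?]; rewrite ?E.
  have e3 : (j.+1 == i) = false by apply/eqP; lia.
  have e4 : (j.+1 == i.+1) = false by apply/eqP; lia.
  by rewrite e3 e4.
by [].
Qed.

Lemma Top_comm q i j f : (i.+1 < j)%nat || (j.+1 < i)%nat ->
  Top q i (Top q j f) = Top q j (Top q i f).
Proof.
move=> h.
have h' : (j.+1 < i)%nat || (i.+1 < j)%nat by rewrite orbC.
apply: functional_extensionality => x.
rewrite (mk2_id x j); move: (x j) (x j.+1) => c d.
rewrite (mk2_id (mk2 x j c d) i).
rewrite /Top /= !(sw_mk2, mk2_0, mk2_1, sw_mk2_far _ _ _ _ _ h, sw_mk2_far _ _ _ _ _ h',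
  proj1 (mk2_far _ _ _ _ _ h), proj2 (mk2_far _ _ _ _ _ h),
  proj1 (mk2_far _ _ _ _ _ h'), proj2 (mk2_far _ _ _ _ _ h')).
ring.
Qed.
Definition TL (q : algC) (p : nat * bool) f := if p.2 then Top q p.1 f else Tinv q p.1 f.
Definition rhoN (q : algC) (w : seq (nat * bool)) f := foldr (TL q) f w.
Definition wnat {n} (w : word n) : seq (nat * bool) := map (fun x => (nat_of_ord x.1, x.2)) w.

Lemma rhoN_cat q a b f : rhoN q (a ++ b) f = rhoN q a (rhoN q b f).
Proof. by rewrite /rhoN foldr_cat. Qed.

Lemma TL_inv q i b f : q != 0 -> TL q (i, b) (TL q (i, ~~ b) f) = f.
Proof. by move=> q0; case: b; rewrite /TL /= ?Top_Tinv ?Tinv_Top. Qed.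

Lemma rho_winv q n (u : word n) f : q != 0 ->
  rhoN q (wnat u) (rhoN q (wnat (winv n u)) f) = f.
Proof.
move=> q0; elim: u f => [|x u IH] f //=.
have -> : winv n (x :: u) = winv n u ++ [:: (x.1, ~~ x.2)].
  by rewrite /winv rev_cons map_rcons -cats1.
rewrite /wnat map_cat -/(wnat _) rhoN_cat /= IH.
by case: x => [i b] /=; rewrite TL_inv.
Qed.

Lemma Top_scale q i a g : Top q i (fun x => a * g x) = fun x => a * Top q i g x.
Proof. apply: functional_extensionality => x; rewrite /Top; ring. Qed.
Lemma Top_add q i g h : Top q i (fun x => g x + h x) = fun x => Top q i g x + Top q i h x.
Proof. apply: functional_extensionality => x; rewrite /Top; ring. Qed.

Lemma iter_eig q i l g m : Top q i g = (fun x => l * g x) ->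
  ssrnat.iter m (Top q i) g = fun x => l ^+ m * g x.
Proof.
move=> H; elim: m => [|m IH] /=.
  by apply: functional_extensionality => x; rewrite expr0 mul1r.
rewrite IH Top_scale H; apply: functional_extensionality => x; rewrite exprS; ring.
Qed.

Lemma iter_add q i g h m :
  ssrnat.iter m (Top q i) (fun x => g x + h x) = fun x => ssrnat.iter m (Top q i) g x + ssrnat.iter m (Top q i) h x.
Proof. elim: m => [|m IH] //=; by rewrite IH Top_add. Qed.

Lemma iter_Top q i k f : q ^+ k = 1 -> ~~ odd k -> q + 1 != 0 ->
  ssrnat.iter k (Top q i) f = f.
Proof.
move=> qk ek q1.
set e1 := fun x => (q + 1)^-1 * Top q i f x + (q + 1)^-1 * f x.
set e2 := fun x => (q * (q + 1)^-1) * f x + (- (q + 1)^-1) * Top q i f x.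
have E : f = fun x => e1 x + e2 x.
  by apply: functional_extensionality => x; rewrite /e1 /e2; field.
have H1 : Top q i e1 = fun x => q * e1 x.
  rewrite /e1 Top_lin Top_quad; apply: functional_extensionality => x; field.
  by [].
have H2 : Top q i e2 = fun x => (-1) * e2 x.
  rewrite /e2 Top_lin Top_quad; apply: functional_extensionality => x; field.
  by [].
rewrite {1}E iter_add (@iter_eig q i q e1 k H1) (@iter_eig q i (-1) e2 k H2) qk.
have -> : (-1 : algC) ^+ k = 1 by rewrite -signr_odd (negbTE ek).
by apply: functional_extensionality => x; rewrite !mul1r [in RHS]E.
Qed.

Lemma iter_Tinv q i k f : q != 0 -> ssrnat.iter k (Top q i) f = f -> ssrnat.iter k (Tinv q i) f = f.
Proof.
move=> q0 H.
suff S : forall g, ssrnat.iter k (Tinv q i) (ssrnat.iter k (Top q i) g) = g by rewrite -{1}H S.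
elim: k {H} => [|k IH] g //.
by rewrite iterSr /= Tinv_Top.
Qed.

Lemma rho_nseq q k (x : nat * bool) f :
  rhoN q (nseq k x) f = ssrnat.iter k (TL q x) f.
Proof. by elim: k => [|k IH] //=; rewrite -IH. Qed.

Lemma rho_pow q n k (x : letter n) f : q != 0 -> q ^+ k = 1 -> ~~ odd k -> q + 1 != 0 ->
  rhoN q (wnat (nseq k x)) f = f.
Proof.
move=> q0 qk ek q1.
rewrite /wnat map_nseq rho_nseq.
case: x => [i []]; rewrite /TL /=.
  by rewrite iter_Top.
have -> : ssrnat.iter k (fun f0 => Tinv q i f0) f = ssrnat.iter k (Tinv q i) f by [].
by rewrite iter_Tinv // iter_Top.
Qed.

Lemma rho_step q n (w1 w2 : word n) : q != 0 -> braid_step n w1 w2 ->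
  rhoN q (wnat w1) = rhoN q (wnat w2).
Proof.
move=> q0 [x y a b | x y i j hij | x y i j hij];
  apply: functional_extensionality => f; rewrite /wnat !map_cat !rhoN_cat /=.
- by rewrite TL_inv.
- by rewrite /TL /= Top_comm.
- by rewrite /TL /= hij Top_braid.
Qed.

Lemma rho_beq q n (w1 w2 : word n) : q != 0 -> braid_eq n w1 w2 ->
  rhoN q (wnat w1) = rhoN q (wnat w2).
Proof.
move=> q0; elim => [a b H | a | a b _ IH | a b c _ IH1 _ IH2].
- exact: rho_step.
- by [].
- by rewrite IH.
- by rewrite IH1 IH2.
Qed.

Lemma rho_Bnk q n k (w : word n) f : q != 0 -> q ^+ k = 1 -> ~~ odd k -> q + 1 != 0 ->
  in_Bnk n k w -> rhoN q (wnat w) f = f.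
Proof.
move=> q0 qk ek q1 [rs H]; rewrite (rho_beq q n _ _ q0 H); clear H.
elim: rs f => [|r rs IH] f //=.
rewrite /wnat map_cat -!/(wnat _) rhoN_cat IH.
rewrite /conj_pow /wnat !map_cat -!/(wnat _) !rhoN_cat rho_pow //.
exact: rho_winv.
Qed.
Definition vf {m} (v : 'cV[algC]_m) : nat -> algC :=
  fun r => match (insub r : option 'I_m) with Some i => v i 0 | None => 0 end.

Lemma vf_ord m (v : 'cV[algC]_m) (r : 'I_m) : vf v r = v r 0.
Proof.
rewrite /vf; case: insubP => [r' _ E|]; last by rewrite ltn_ord.
by rewrite (val_inj E).
Qed.

Lemma vf_out m (v : 'cV[algC]_m) r : (m <= r)%nat -> vf v r = 0.
Proof. by move=> h; rewrite /vf insubF // ltnNge h. Qed.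

Lemma vf_inj m (v w : 'cV[algC]_m) : (forall r, vf v r = vf w r) -> v = w.
Proof. by move=> H; apply/matrixP => r c; rewrite (ord1 c) -!vf_ord H. Qed.

Lemma sum_pick m (v : 'cV[algC]_m) (a : nat) (c : algC) :
  \sum_(j < m) (if (nat_of_ord j == a) then c else 0) * v j 0 = c * vf v a.
Proof.
rewrite /vf; case: insubP => [a' _ aE | aout].
  rewrite (bigD1 a') //= -aE eqxx big1 ?addr0 // => j /negbTE ne.
  have E : (nat_of_ord j == nat_of_ord a') = false := ne.
  by rewrite E mul0r.
rewrite big1 ?mulr0 // => j _.
have -> : (nat_of_ord j == a) = false.
  by apply/eqP => E; move: aout; rewrite -E ltn_ord.
by rewrite mul0r.
Qed.

Definition Bop (t : algC) (i : nat) (u : nat -> algC) : nat -> algC :=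
  fun r => if r == i then (if i is i'.+1 then t * u i' else 0) - t * u i + u i.+1 else u r.
Definition Binv (t : algC) (i : nat) (u : nat -> algC) : nat -> algC :=
  fun r => if r == i then (if i is i'.+1 then u i' else 0) - t^-1 * u i + t^-1 * u i.+1 else u r.

Lemma Bop_Binv t i u : t != 0 -> Bop t i (Binv t i u) = u.
Proof.
move=> t0; apply: functional_extensionality => r; rewrite /Bop /Binv.
have h1 : (i.+1 == i) = false by apply/eqP; lia.
case: (eqVneq r i) => [->|_] //.
rewrite eqxx h1; case: i h1 => [|i'] h1.
  by field.
have h2 : (i' == i'.+1) = false by apply/eqP; lia.
rewrite h2; by field.
Qed.

Lemma Binv_Bop t i u : t != 0 -> Binv t i (Bop t i u) = u.
Proof.
move=> t0; apply: functional_extensionality => r; rewrite /Bop /Binv.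
have h1 : (i.+1 == i) = false by apply/eqP; lia.
case: (eqVneq r i) => [->|_] //.
rewrite eqxx h1; case: i h1 => [|i'] h1.
  by field.
have h2 : (i' == i'.+1) = false by apply/eqP; lia.
rewrite h2; by field.
Qed.

Lemma vf_gen n t (i : 'I_n.-1) (v : 'cV[algC]_n.-1) :
  vf (burau_gen n t i *m v) = Bop t i (vf v).
Proof.
apply: functional_extensionality => r.
case: (ltnP r n.-1) => hr; last first.
  rewrite vf_out // /Bop.
  have -> : (r == i) = false by apply/eqP => E; move: hr; rewrite E leqNgt ltn_ord.
  by rewrite vf_out.
have -> : r = nat_of_ord (Ordinal hr) by [].
set r' := Ordinal hr.
rewrite vf_ord mxE /Bop.
case: (eqVneq r' i) => [E|ne].
  rewrite E eqxx.
  have -> : \sum_(j < n.-1) burau_gen n t i i j * v j 0 =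
     \sum_(j < n.-1) ((if nat_of_ord j == i.-1 then (if nat_of_ord i is 0 then 0 else t) else 0) * v j 0
       + (if nat_of_ord j == i then - t else 0) * v j 0
       + (if nat_of_ord j == i.+1 then 1 else 0) * v j 0).
    apply: eq_bigr => j _; rewrite -!mulrDl; congr (_ * _); rewrite mxE eqxx /=.
    have -> : (j == i) = (nat_of_ord j == nat_of_ord i) by [].
    move: (nat_of_ord j) (nat_of_ord i) => a b.
    case: b => [|b] /=; repeat (case: ifP => /eqP ?); try lia; by rewrite ?add0r ?addr0.
  rewrite !big_split /= !sum_pick.
  case: (nat_of_ord i) => [|i'] /=; ring.
have -> : (nat_of_ord r' == nat_of_ord i) = false by exact: (negbTE ne).
rewrite (eq_bigr (fun j => (if nat_of_ord j == nat_of_ord r' then 1 else 0) * v j 0)).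
  by rewrite sum_pick mul1r.
move=> j _; rewrite mxE ne /=; congr (_ * _).
have -> : (r' == j) = (nat_of_ord j == nat_of_ord r') by rewrite eq_sym.
by case: (_ == _).
Qed.

Lemma mulcol m p (A : 'M[algC]_(m, m)) (B : 'M[algC]_(m, p)) r c :
  (A *m B) r c = (A *m col c B) r 0.
Proof. rewrite !mxE; apply: eq_bigr => j _; by rewrite mxE. Qed.

Lemma gen_unit n t (i : 'I_n.-1) : t != 0 -> burau_gen n t i \in unitmx.
Proof.
move=> t0.
pose H := \matrix_(r < n.-1, c < n.-1) Binv t i (fun s => (s == nat_of_ord c)%:R) r.
suff E : burau_gen n t i *m H = 1%:M by case: (mulmx1_unit E).
apply/matrixP => r c; rewrite mulcol -vf_ord vf_gen.
have -> : vf (col c H) = Binv t i (fun s => (s == nat_of_ord c)%:R).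
  apply: functional_extensionality => s.
  case: (ltnP s n.-1) => hs.
    have -> : s = nat_of_ord (Ordinal hs) by [].
    by rewrite vf_ord !mxE.
  rewrite vf_out // /Binv.
  have -> : (s == i) = false by apply/eqP => E; move: hs; rewrite E leqNgt ltn_ord.
  have -> : (s == nat_of_ord c) = false by apply/eqP => E; move: hs; rewrite E leqNgt ltn_ord.
  by [].
by rewrite Bop_Binv // mxE.
Qed.

Lemma vf_ginv n t (i : 'I_n.-1) (v : 'cV[algC]_n.-1) : t != 0 ->
  vf (invmx (burau_gen n t i) *m v) = Binv t i (vf v).
Proof.
move=> t0.
set w := invmx (burau_gen n t i) *m v.
have -> : v = burau_gen n t i *m w by rewrite /w mulKVmx // gen_unit.
by rewrite vf_gen Binv_Bop.
Qed.

Definition BL (t : algC) (p : nat * bool) (u : nat -> algC) :=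
  if p.2 then Bop t p.1 u else Binv t p.1 u.
Definition rhoB (t : algC) (w : seq (nat * bool)) u := foldr (BL t) u w.

Lemma vf_eval n t (w : word n) (v : 'cV[algC]_n.-1) : t != 0 ->
  vf (burau_eval n t w *m v) = rhoB t (wnat w) (vf v).
Proof.
move=> t0; elim: w => [|x w IH] /=; first by rewrite mul1mx.
rewrite -mulmxA -IH /burau_letter /BL /=.
by case: x.2; [rewrite vf_gen | rewrite vf_ginv].
Qed.

Lemma burau_one n t (w : word n) : t != 0 ->
  (forall c : 'I_n.-1, rhoB t (wnat w) (fun s => (s == nat_of_ord c)%:R) =
                        (fun s => (s == nat_of_ord c)%:R)) ->
  burau_eval n t w = 1%:M.
Proof.
move=> t0 H; apply/matrixP => r c.
rewrite -[burau_eval n t w]mulmx1 mulcol -vf_ord vf_eval //.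
have -> : vf (col c (1%:M : 'M[algC]_n.-1)) = (fun s => (s == nat_of_ord c)%:R).
  apply: functional_extensionality => s.
  case: (ltnP s n.-1) => hs.
    have -> : s = nat_of_ord (Ordinal hs) by [].
    by rewrite vf_ord !mxE.
  rewrite vf_out //.
  have -> : (s == nat_of_ord c) = false by apply/eqP => E; move: hs; rewrite E leqNgt ltn_ord.
  by [].
by rewrite H mxE.
Qed.
(* ---------- the kernel word (Bigelow) ---------- *)
Definition raw : seq (nat * bool) := [:: (1%nat, false); (2%nat, false); (3%nat, false); (3%nat, false); (3%nat, false); (1%nat, false); (0%nat, false); (0%nat, false); (1%nat, false); (2%nat, true); (3%nat, false); (2%nat, false); (1%nat, true); (0%nat, true); (0%nat, true); (1%nat, true); (3%nat, true); (3%nat, true); (3%nat, true); (2%nat, true); (1%nat, true); (3%nat, false); (3%nat, false); (3%nat, false); (3%nat, false); (3%nat, false); (0%nat, false); (1%nat, false); (1%nat, false); (0%nat, false); (0%nat, false); (1%nat, false); (0%nat, true); (0%nat, true); (1%nat, false); (2%nat, false); (3%nat, true); (3%nat, false); (2%nat, false); (1%nat, false); (0%nat, false); (0%nat, false); (1%nat, false); (2%nat, false); (3%nat, false); (3%nat, false); (2%nat, true); (1%nat, true); (0%nat, false); (0%nat, false); (1%nat, true); (0%nat, true); (0%nat, true); (1%nat, true); (1%nat, true); (0%nat, true); (3%nat, true); (3%nat, true); (3%nat, true); (3%nat, true); (3%nat, true); (1%nat, false); (2%nat, false); (3%nat, false); (3%nat, false); (3%nat, false); (1%nat, false); (0%nat,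 false); (0%nat, false); (1%nat, false); (2%nat, true); (3%nat, true); (2%nat, false); (1%nat, true); (0%nat, true); (0%nat, true); (1%nat, true); (3%nat, true); (3%nat, true); (3%nat, true); (2%nat, true); (1%nat, true); (3%nat, false); (3%nat, false); (3%nat, false); (3%nat, false); (3%nat, false); (0%nat, false); (1%nat, false); (1%nat, false); (0%nat, false); (0%nat, false); (1%nat, false); (0%nat, true); (0%nat, true); (1%nat, false); (2%nat, false); (3%nat, true); (3%nat, true); (2%nat, true); (1%nat, true); (0%nat, true); (0%nat, true); (1%nat, true); (2%nat, true); (3%nat, true); (3%nat, false); (2%nat, true); (1%nat, true); (0%nat, false); (0%nat, false); (1%nat, true); (0%nat, true); (0%nat, true); (1%nat, true); (1%nat, true); (0%nat, true); (3%nat, true); (3%nat, true); (3%nat, true); (3%nat, true); (3%nat, true)].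

Arguments padd : simpl never.
Arguments interp : simpl never.
Arguments psh : simpl never.
Arguments pneg : simpl never.


Lemma interp_nil t : interp t nil = 0. Proof. by []. Qed.

Definition Bs (t : algC) (i : nat) (u : nat -> algC) : nat -> algC :=
  fun r => if r == i then (if i is i'.+1 then t * u i' else 0) - u i + u i.+1 else t * u r.
Definition BLs (t : algC) (p : nat * bool) u := if p.2 then Bop t p.1 u else Bs t p.1 u.
Definition rhoBs (t : algC) (w : seq (nat * bool)) u := foldr (BLs t) u w.

Lemma Bop_scale t i a u : Bop t i (fun r => a * u r) = fun r => a * Bop t i u r.
Proof. apply: functional_extensionality => r; rewrite /Bop; case: (r == i) => //; case: i => [|i'] /=; ring. Qed.
Lemma Binv_scale t i a u : Binv t i (fun r => a * u r) = fun r => a * Binv t i u r.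
Proof. apply: functional_extensionality => r; rewrite /Binv; case: (r == i) => //; case: i => [|i'] /=; ring. Qed.
Lemma Bs_Binv t i u : t != 0 -> Bs t i u = fun r => t * Binv t i u r.
Proof.
move=> t0; apply: functional_extensionality => r; rewrite /Bs /Binv.
case: (r == i) => //; case: i => *; field; done.
Qed.

Lemma rhoBs_scale t w u : t != 0 ->
  rhoBs t w u = fun r => t ^+ (count (fun p => ~~ p.2) w) * rhoB t w u r.
Proof.
move=> t0; elim: w => [|[i b] w IH] /=.
  by apply: functional_extensionality => r; rewrite expr0 mul1r.
rewrite IH /BLs /BL /=; case: b => /=.
  by rewrite Bop_scale add0n.
rewrite Bs_Binv // Binv_scale; apply: functional_extensionality => r.
by rewrite add1n exprS mulrA.
Qed.

Definition VB (i : nat) (b : bool) (V : seq (list Z)) : seq (list Z) :=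
  map (fun r => if r == i then
     (if b then padd (padd (if i is i'.+1 then psh (nth nil V i') else nil) (pneg (psh (nth nil V i)))) (nth nil V i.+1)
      else padd (padd (if i is i'.+1 then psh (nth nil V i') else nil) (pneg (nth nil V i))) (nth nil V i.+1))
    else (if b then nth nil V r else psh (nth nil V r))) (iota 0 5).

Definition agreeB (t : algC) (u : nat -> algC) (V : seq (list Z)) :=
  forall r, u r = if (r < 5)%nat then interp t (nth nil V r) else 0.

Lemma VB_ok t i b u V : (i < 4)%nat -> agreeB t u V -> agreeB t (BLs t (i, b) u) (VB i b V).
Proof.
move=> hi H r; rewrite /BLs /=.
case: (ltnP r 5) => hr; last first.
  have ne : (r == i) = false by apply/eqP; lia.
  by case: b; rewrite /Bop /Bs ne H ltnNge hr /= ?mulr0.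
case: i hi => [|[|[|[|i]]]] hi //;
case: r hr => [|[|[|[|[|r]]]]] hr //; case: b;
rewrite /Bop /Bs /VB /= ?interp_add ?interp_neg ?interp_sh ?H /= ?interp_nil; ring.
Qed.

Definition VrhoBs (w : seq (nat * bool)) V := foldr (fun p V => VB p.1 p.2 V) V w.

Lemma VrhoBs_ok t w u V : all (fun p => (p.1 < 4)%nat) w -> agreeB t u V ->
  agreeB t (rhoBs t w u) (VrhoBs w V).
Proof.
move=> hw H; elim: w hw => [|[i b] w IH] //= /andP [hi hw].
by apply: VB_ok => //; apply: IH.
Qed.

Lemma rhoB_far t w u : all (fun p => (p.1 < 4)%nat) w -> (forall r, (r < 5)%nat -> u r = 0) ->
  rhoB t w u = u.
Proof.
move=> hw H; elim: w hw => [|[i b] w IH] //= /andP [hi hw].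
rewrite IH //; apply: functional_extensionality => r.
have h1 : (i < 5)%nat by lia.
have h2 : (i.+1 < 5)%nat by lia.
have h3 : u i.-1 = 0 by apply: H; lia.
rewrite /BL /=; case: b; rewrite /Bop /Binv; case: (eqVneq r i) => [E|_] //=; rewrite ?E;
  rewrite (H i) // (H i.+1) //; clear E;
  case: i hi h1 h2 h3 => [|i'] /= _ _ _ h3; rewrite ?h3; ring.
Qed.

Definition tpow (N : nat) : list Z := nseq N 0%Z ++ [:: 1%Z].
Lemma interp_tpow t N : interp t (tpow N) = t ^+ N.
Proof.
elim: N => [|N IH]; first by rewrite /tpow /= /interp zR1 mulr0 addr0 expr0.
by rewrite /tpow /= -/(psh _) interp_sh -/(tpow _) IH exprS.
Qed.

Definition unitvec (c : nat) : seq (list Z) := map (fun r => if r == c then [:: 1%Z] else nil) (iota 0 5).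

Definition checkB : bool :=
  all (fun c => let V := VrhoBs raw (unitvec c) in
     all (fun r => iszero (padd (nth nil V r) (pneg (if r == c then tpow 61 else nil)))) (iota 0 5))
   (iota 0 5).

Lemma checkB_ok : checkB = true.
Proof. by vm_compute. Qed.

Lemma raw_small : all (fun p => (p.1 < 4)%nat) raw.
Proof. by vm_compute. Qed.

Lemma raw_neg : count (fun p => ~~ p.2) raw = 61%nat.
Proof. by vm_compute. Qed.

Arguments rhoB : simpl never.
Arguments rhoN : simpl never.

Lemma rhoB_raw t (c : nat) : t != 0 ->
  rhoB t raw (fun s => (s == c)%:R) = (fun s => (s == c)%:R).
Proof.
move=> t0.
case: (ltnP c 5) => hc; last first.
  apply: rhoB_far; first exact: raw_small.
  move=> r hr; have -> : (r == c) = false by apply/eqP; lia. by [].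
have A : agreeB t (fun s => (s == c)%:R) (unitvec c).
  move=> r; case: (ltnP r 5) => hr; last first.
    by have -> : (r == c) = false by apply/eqP; lia.
  rewrite /unitvec (nth_map 0%nat) ?size_iota // nth_iota // add0n.
  by case: (r == c); rewrite /interp ?zR1 ?mulr0 ?addr0.
have B := VrhoBs_ok t raw _ _ raw_small A.
have C := checkB_ok; move: C; rewrite /checkB => /allP /(_ c); rewrite mem_iota add0n => /(_ hc) /allP C.
have S : rhoBs t raw (fun s => (s == c)%:R) = fun r => t ^+ 61 * (r == c)%:R.
  apply: functional_extensionality => r; rewrite B.
  case: (ltnP r 5) => hr; last first.
    have -> : (r == c) = false by apply/eqP; lia.
    by rewrite mulr0.
  move: (C r); rewrite mem_iota add0n => /(_ hr) /(interp_zero t).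
  rewrite interp_add interp_neg.
  case: (r == c); rewrite ?interp_tpow ?mulr1 ?mulr0 => /eqP; rewrite subr_eq0 => /eqP //.
apply: functional_extensionality => r.
move: S; rewrite rhoBs_scale // raw_neg => /(congr1 (fun g => g r)); cbv beta.
apply: mulfI; exact: expf_neq0.
Qed.
Definition c1s (q : algC) (a b : bool) : algC := c1 q a b - (q - 1).
Definition Ts (q : algC) (i : nat) (f : (nat -> bool) -> algC) (x : nat -> bool) : algC :=
  c1s q (x i) (x i.+1) * f x + c2 q (x i) (x i.+1) * f (sw i x).
Definition TLs (q : algC) (p : nat * bool) f := if p.2 then Top q p.1 f else Ts q p.1 f.
Definition rhoS (q : algC) (w : seq (nat * bool)) f := foldr (TLs q) f w.

Lemma Tinv_scale q i a g : Tinv q i (fun x => a * g x) = fun x => a * Tinv q i g x.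
Proof. apply: functional_extensionality => x; rewrite /Tinv /Top; ring. Qed.
Lemma Ts_Tinv q i g : q != 0 -> Ts q i g = fun x => q * Tinv q i g x.
Proof. move=> q0; apply: functional_extensionality => x; rewrite /Ts /Tinv /Top /c1s; field; done. Qed.

Lemma rhoS_scale q w f : q != 0 ->
  rhoS q w f = fun x => q ^+ (count (fun p => ~~ p.2) w) * rhoN q w f x.
Proof.
move=> q0; elim: w => [|[i b] w IH] /=.
  by apply: functional_extensionality => r; rewrite expr0 mul1r.
rewrite IH /TLs /TL /rhoN /= -/(rhoN q w f); case: b => /=.
  by rewrite Top_scale add0n.
rewrite Ts_Tinv // Tinv_scale; apply: functional_extensionality => r.
by rewrite add1n exprS mulrA.
Qed.

Definition code (s : seq bool) : nat := foldr (fun (b : bool) (acc : nat) => (nat_of_bool b + 2 * acc)%nat) 0%nat s.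
Definition decode (c : nat) : seq bool := mkseq (fun j => odd (c %/ 2 ^ j)) 5.
Definition swl (s : seq bool) (i : nat) : seq bool :=
  mkseq (fun j => if j == i then nth false s i.+1 else if j == i.+1 then nth false s i else nth false s j) 5.

Definition m1 (b x y : bool) (p : list Z) : list Z :=
  if b then (if x == y then psh p else if x then padd (psh p) (pneg p) else nil)
  else (if x == y then p else if x then nil else padd p (pneg (psh p))).
Definition m2 (x y : bool) (p : list Z) : list Z :=
  if x == y then nil else if x then p else psh p.

Lemma interp_m1 q b x y p :
  interp q (m1 b x y p) = (if b then c1 q x y else c1s q x y) * interp q p.
Proof.
case: b; case: x; case: y;
rewrite /m1 /c1s /c1 /= ?interp_add ?interp_neg ?interp_sh ?interp_nil; ring.
Qed.
Lemma interp_m2 q x y p : interp q (m2 x y p) = c2 q x y * interp q p.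
Proof. case: x; case: y; rewrite /m2 /c2 /= ?interp_sh ?interp_nil; ring. Qed.

Definition VT (i : nat) (b : bool) (V : seq (list Z)) : seq (list Z) :=
  map (fun c => let s := decode c in
    padd (m1 b (nth false s i) (nth false s i.+1) (nth nil V c))
         (m2 (nth false s i) (nth false s i.+1) (nth nil V (code (swl s i))))) (iota 0 32).

Definition agreeT (q : algC) (f : (nat -> bool) -> algC) (V : seq (list Z)) :=
  forall s, size s = 5%nat -> f (fun j => nth false s j) = interp q (nth nil V (code s)).

Lemma code_lt s : size s = 5%nat -> (code s < 32)%nat.
Proof.
case: s => [|a0 [|a1 [|a2 [|a3 [|a4 [|]]]]]] //= _.
by case: a0; case: a1; case: a2; case: a3; case: a4.
Qed.
Lemma decode_code s : size s = 5%nat -> decode (code s) = s.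
Proof.
case: s => [|a0 [|a1 [|a2 [|a3 [|a4 [|]]]]]] //= _.
by case: a0; case: a1; case: a2; case: a3; case: a4.
Qed.

Lemma sw_swl i s : (i < 4)%nat -> size s = 5%nat ->
  sw i (fun j => nth false s j) = (fun j => nth false (swl s i) j).
Proof.
move=> hi hs; apply: functional_extensionality => j.
case: (ltnP j 5) => hj.
  by rewrite /swl nth_mkseq.
rewrite /swl nth_default ?size_mkseq // /sw.
have -> : (j == i) = false by apply/eqP; lia.
have -> : (j == i.+1) = false by apply/eqP; lia.
by rewrite nth_default ?hs.
Qed.

Lemma VT_ok q i b f V : (i < 4)%nat -> agreeT q f V -> agreeT q (TLs q (i, b) f) (VT i b V).
Proof.
move=> hi H s hs.
have E : TLs q (i, b) f (fun j => nth false s j) =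
   (if b then c1 q (nth false s i) (nth false s i.+1) else c1s q (nth false s i) (nth false s i.+1))
     * f (fun j => nth false s j)
   + c2 q (nth false s i) (nth false s i.+1) * f (fun j => nth false (swl s i) j).
  by rewrite /TLs /=; case: b; rewrite /Top /Ts -(sw_swl i s hi hs).
rewrite E /VT (nth_map 0%nat) ?size_iota ?code_lt // nth_iota ?code_lt // add0n.
rewrite decode_code // interp_add interp_m1 interp_m2.
rewrite H // H //; by rewrite size_mkseq.
Qed.

Definition VrhoS (w : seq (nat * bool)) V := foldr (fun p V => VT p.1 p.2 V) V w.

Lemma VrhoS_ok q w f V : all (fun p => (p.1 < 4)%nat) w -> agreeT q f V ->
  agreeT q (rhoS q w f) (VrhoS w V).
Proof.
move=> hw H; elim: w hw => [|[i b] w IH] //= /andP [hi hw].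
by apply: VT_ok => //; apply: IH.
Qed.

Definition f0 (x : nat -> bool) : algC :=
  if code [:: x 0%nat; x 1%nat; x 2%nat; x 3%nat; x 4%nat] == 6%nat then 1 else 0.
Definition unitvecT : seq (list Z) := map (fun c => if c == 6%nat then [:: 1%Z] else nil) (iota 0 32).

Lemma f0_agree q : agreeT q f0 unitvecT.
Proof.
move=> s hs.
rewrite /unitvecT (nth_map 0%nat) ?size_iota ?code_lt // nth_iota ?code_lt // add0n /f0.
have -> : [:: nth false s 0; nth false s 1; nth false s 2; nth false s 3; nth false s 4] = s.
  by case: s hs => [|a0 [|a1 [|a2 [|a3 [|a4 [|]]]]]].
by case: (code s == 6%nat); rewrite /interp ?zR1 ?mulr0 ?addr0.
Qed.

Definition Dlist : list Z := nth nil (VrhoS raw unitvecT) 18.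

Lemma Dlist_coef : Z.eqb (nth 0%Z Dlist 31) 1 = true.
Proof. by vm_compute. Qed.

Fixpoint pol (p : list Z) : {poly algC} :=
  match p with nil => 0 | cons c p' => (zR c)%:P + 'X * pol p' end.

Lemma horner_pol p x : (pol p).[x] = interp x p.
Proof.
elim: p => [|c p IH] /=; first by rewrite horner0.
rewrite hornerD hornerC mulrC hornerMX IH.
have -> : interp x (c :: p) = zR c + x * interp x p by [].
ring.
Qed.

Lemma coef_pol p k : (pol p)`_k = zR (nth 0%Z p k).
Proof.
elim: p k => [|c p IH] k /=; first by rewrite coef0 nth_nil zR0.
rewrite coefD coefC coefXM; case: k => [|k] /=; first by rewrite addr0.
by rewrite add0r IH.
Qed.

Lemma pol_D_neq0 : pol Dlist != 0.
Proof.
apply/eqP => E.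
have := coef_pol Dlist 31; rewrite E coef0.
move: Dlist_coef => /Z.eqb_spec ->; rewrite zR1 => /eqP; by rewrite eq_sym oner_eq0.
Qed.
Lemma wnat_mk n (H0 : (0 < n.-1)%nat) (h4 : (4 <= n.-1)%nat) :
  wnat (map (fun p : nat * bool => ((Ordinal (ltn_pmod p.1 H0) : 'I_n.-1), p.2)) raw) = raw.
Proof.
rewrite /wnat -map_comp; apply: map_id_in => p hp /=.
have : (p.1 < 4)%nat by move: raw_small => /allP /(_ p hp).
case: p hp => i b /= _ hi; rewrite modn_small //; lia.
Qed.

Delimit Scope N_scope with num.
Delimit Scope nat_scope with N.

Theorem proposition2p2 (n : nat) (hn : (5 <= n)%N) :
  exists s : seq algC,
    forall (k : nat) (q : algC),
      ~~ odd k -> k.-primitive_root q -> q \notin s ->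
      ~ (forall w : word n,
            burau_eval n (- q) w = 1%:M <-> in_Bnk n k w).
Proof.
have [rs Hrs] := closed_field_poly_normal (pol Dlist).
exists (-1 :: rs) => k q ek pq qs H.
have qk : q ^+ k = 1 := prim_expr_order pq.
have kpos := prim_order_gt0 pq.
have q0 : q != 0.
  apply/eqP => E; move: qk; rewrite E expr0n.
  have -> : (k == 0%nat) = false by apply/eqP; lia.
  by move/eqP; rewrite eq_sym oner_eq0.
have q1 : q + 1 != 0.
  apply/eqP => E; move: qs; rewrite inE.
  have -> : q = -1 by apply/eqP; rewrite -subr_eq0 opprK E.
  by rewrite eqxx.
have t0 : - q != 0 by rewrite oppr_eq0.
have H0 : (0 < n.-1)%nat by lia.
have h4 : (4 <= n.-1)%nat by lia.
set w0 := map (fun p : nat * bool => ((Ordinal (ltn_pmod p.1 H0) : 'I_n.-1), p.2)) raw.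
have Hw : wnat w0 = raw := wnat_mk n H0 h4.
have B : burau_eval n (-q) w0 = 1%:M.
  apply: burau_one => // c; rewrite Hw; exact: rhoB_raw.
have K : in_Bnk n k w0 by apply/(H w0).
have R := rho_Bnk q n k w0 f0 q0 qk ek q1 K.
rewrite Hw in R.
have S := VrhoS_ok q raw f0 unitvecT raw_small (f0_agree q).
have S0 := S [:: false; true; false; false; true] erefl.
rewrite rhoS_scale // R raw_neg in S0.
have F0 : f0 (fun j => nth false [:: false; true; false; false; true] j) = 0 by [].
rewrite F0 mulr0 in S0.
have Hc : code [:: false; true; false; false; true] = 18%nat by [].
rewrite Hc -/Dlist -horner_pol in S0.
have rt : root (pol Dlist) q by rewrite /root -S0.
move: rt; rewrite Hrs rootZ; last by rewrite lead_coef_eq0 pol_D_neq0.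
rewrite root_prod_XsubC => qrs.
by move: qs; rewrite inE qrs orbT.
Qed.
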